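(* Let $\Gamma$ be a finite $R$-thick vertex-transitive digraph with no loop. Then: (a) $\Gamma\cong\Sigma[\overline{\mathrm{K}}_b]$ for some digraph $\Sigma$ and some integer $b\geqslant 2$; (b) if $\Gamma$ is a normal Cayley digraph, then $\Gamma$ has order at most $4$; (c) if $\Gamma$ is a normal circulant with nonempty arc set, then $\Gamma\cong\mathrm{C}_4$.
   Context: A digraph is a pair $(V,A)$ with $A\subseteq V\times V$; a loop is an arc $(v,v)$; the order is $|V|$. For $v\in V$, $\Gamma^+(v)=\{w:(v,w)\in A\}$ and $\Gamma^-(v)=\{u:(u,v)\in A\}$. $\Gamma$ is $R$-thick if there are distinct vertices $u,v$ with $\Gamma^+(u)=\Gamma^+(v)$ and $\Gamma^-(u)=\Gamma^-(v)$. $\overline{\mathrm{K}}_b$ has $b$ vertices and no arcs; $\mathrm{C}_4$ is the undirected $4$-cycle viewed as a digraph. Lexicographic product $\Sigma[\Delta]$: vertex set $V(\Sigma)\times V(\Delta)$, $(u_1,u_2)\to(v_1,v_2)$ iff $u_1\to v_1$ in $\Sigma$, or $u_1=v_1$ and $u_2\to v_2$ in $\Delta$. The Cayley digraph $\mathrm{Cay}(G,S)$ ($S\subseteq G$ nonempty) has vertex set $G$ and $x\to y$ iff $yx^{-1}\in S$; it is normal if the group $\widehat G$ of right multiplications $x\mapsto xg$ is normal in its automorphism group; $\Gamma$ is a normal Cayley digraph if it is isomorphic to a normal Cayley digraph of some group. $\Gamma$ is a normal circulant if $\mathrm{Aut}(\Gamma)$ has a cyclic subgroup regular on $V$ and normal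 in $\mathrm{Aut}(\Gamma)$. *)

(* Defs.v *)
From mathcomp Require Import all_boot all_fingroup all_solvable.
Set Implicit Arguments. Unset Strict Implicit. Unset Printing Implicit Defensive.
Local Open Scope group_scope.

Section Digraphs.

Variables (V : finType) (A : rel V).

Definition loopless : Prop := forall v : V, ~~ A v v.

Definition has_arc : Prop := exists x y : V, A x y.

Definition outnb (v : V) : {set V} := [set w | A v w].
Definition innb (v : V) : {set V} := [set u | A u v].

Definition R_thick : Prop :=
  exists u v : V, u != v /\ outnb u = outnb v /\ innb u = innb v.

Definition Aut : {set {perm V}} :=
  [set g : {perm V} | [forall x, forall y, A (g x) (g y) == A x y]].

Definition vertex_transitive : Prop :=
  forall x y : V, exists2 g, g \in Aut & g x = y.

Definition regular_on (H : {set {perm V}}) : Prop :=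
  forall x y : V, #|[set h in H | h x == y]| = 1%N.

Definition normal_circulant : Prop :=
  exists H : {group {perm V}},
    [/\ H \subset Aut, cyclic H, regular_on H & H <| Aut].

End Digraphs.

Definition digraph_iso (V W : finType) (A : rel V) (B : rel W) : Prop :=
  exists f : V -> W, bijective f /\ forall x y, B (f x) (f y) = A x y.

Definition lexprod (S D : finType) (sig : rel S) (del : rel D) : rel (S * D) :=
  fun u v => sig u.1 v.1 || ((u.1 == v.1) && del u.2 v.2).

Definition emptyK (b : nat) : rel 'I_b := fun _ _ => false.
Arguments emptyK b : clear implicits.

Definition C4 : rel 'I_4 :=
  fun i j => (val j == (val i).+1 %% 4) || (val i == (val j).+1 %% 4).

Definition cayley (gT : finGroupType) (S : {set gT}) : rel gT :=
  fun x y => ((y * x^-1)%g \in S).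

Definition rmul_perm (gT : finGroupType) (g : gT) : {perm gT} :=
  perm (mulIg g).

Definition Ghat (gT : finGroupType) : {set {perm gT}} :=
  [set rmul_perm g | g : gT].

Definition normal_cayley_of (gT : finGroupType) (S : {set gT}) : Prop :=
  Ghat gT <| Aut (cayley S).

Definition is_normal_cayley (V : finType) (A : rel V) : Prop :=
  exists (gT : finGroupType) (S : {set gT}),
    [/\ S != set0, normal_cayley_of S & digraph_iso A (cayley S)].

(* Main.v *)
Require Import Defs.
From mathcomp Require Import all_boot all_fingroup all_solvable zify.
Set Implicit Arguments. Unset Strict Implicit. Unset Printing Implicit Defensive.
Local Open Scope group_scope.

Definition tw (V : finType) (A : rel V) (u v : V) : bool :=
  (outnb A u == outnb A v) && (innb A u == innb A v).

Lemma twP (V : finType) (A : rel V) u v :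
  reflect (forall z, A u z = A v z /\ A z u = A z v) (tw A u v).
Proof.
apply: (iffP andP) => [[/eqP Ho /eqP Hi] z | H].
  split.
    by move/setP: Ho => /(_ z); rewrite !inE.
  by move/setP: Hi => /(_ z); rewrite !inE.
by split; apply/eqP/setP => z; rewrite !inE; case: (H z).
Qed.

Lemma tw_refl (V : finType) (A : rel V) u : tw A u u.
Proof. by rewrite /tw !eqxx. Qed.

Lemma tw_sym (V : finType) (A : rel V) u v : tw A u v -> tw A v u.
Proof. by rewrite /tw => /andP[/eqP-> /eqP->]; rewrite !eqxx. Qed.

Lemma tw_trans (V : finType) (A : rel V) u v w : tw A u v -> tw A v w -> tw A u w.
Proof. by rewrite /tw => /andP[/eqP-> /eqP->]. Qed.

Lemma tw_arc (V : finType) (A : rel V) u u' v v' :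
  tw A u u' -> tw A v v' -> A u v = A u' v'.
Proof.
move=> /twP H1 /twP H2.
by rewrite (proj1 (H1 v)) (proj2 (H2 u')).
Qed.

Lemma tw_noarc (V : finType) (A : rel V) u v :
  loopless A -> tw A u v -> ~~ A u v.
Proof. by move=> Hl H; rewrite (tw_arc H (tw_refl A v)). Qed.

Lemma AutP (V : finType) (A : rel V) (g : {perm V}) :
  reflect (forall x y, A (g x) (g y) = A x y) (g \in Defs.Aut A).
Proof.
rewrite inE; apply: (iffP forallP) => [H x y | H x].
  by move: (H x) => /forallP /(_ y) /eqP.
by apply/forallP => y; rewrite H.
Qed.

Lemma tw_aut (V : finType) (A : rel V) (g : {perm V}) u v :
  g \in Defs.Aut A -> tw A (g u) (g v) = tw A u v.
Proof.
move/AutP => Hg; apply/twP/twP => H z.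
  by move: (H (g z)); rewrite !Hg.
by rewrite -(permKV g z) !Hg; apply: H.
Qed.

Lemma tw_tperm (V : finType) (A : rel V) u v x :
  tw A u v -> tw A x (tperm u v x).
Proof.
move=> H; case: tpermP => [->|->|_ _]; first by [].
  by apply: tw_sym.
by apply: tw_refl.
Qed.

Lemma tperm_aut (V : finType) (A : rel V) u v :
  tw A u v -> tperm u v \in Defs.Aut A.
Proof.
move=> H; apply/AutP => x y.
by rewrite -(tw_arc (tw_tperm x H) (tw_tperm y H)).
Qed.
Lemma reg_uniq (V : finType) (H : {set {perm V}}) (x : V) h k :
  regular_on H -> h \in H -> k \in H -> h x = k x -> h = k.
Proof.
move=> /(_ x (h x)) /eqP /cards1P [a Ha] hH kH hk.
have: h \in [set h' in H | h' x == h x] by rewrite inE hH eqxx.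
have: k \in [set h' in H | h' x == h x] by rewrite inE kH hk eqxx.
by rewrite Ha !inE => /eqP -> /eqP ->.
Qed.

Lemma reg_ex (V : finType) (H : {set {perm V}}) (x y : V) :
  regular_on H -> exists2 h, h \in H & h x = y.
Proof.
move=> /(_ x y) /eqP /cards1P [a Ha].
have: a \in [set h' in H | h' x == y] by rewrite Ha set11.
by rewrite inE => /andP [aH /eqP ay]; exists a.
Qed.

Lemma reg_card (V : finType) (H : {set {perm V}}) (x : V) :
  regular_on H -> #|H| = #|V|.
Proof.
move=> Hr.
have inj : {in H &, injective (fun h : {perm V} => h x)}.
  by move=> h k hH kH; apply: reg_uniq.
rewrite -(card_in_imset inj) -cardsT.
have -> : [set (h : {perm V}) x | h in H] = [set: V]; last by [].
apply/setP => y; rewrite inE; case: (reg_ex x y Hr) => h hH <-.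
by apply: imset_f.
Qed.

Lemma count4 (gT : finGroupType) (G F : {group gT}) a b :
  F \subset G -> a \in G -> b \in G -> a \notin F -> b \notin F -> a != b ->
  (forall x, x \in G -> x \notin F -> x = a \/ x = b) -> (#|G| <= 4)%N.
Proof.
move=> sFG aG bG aF bF ab Hx.
have E : G :\: F = [set a; b].
  apply/setP => x; rewrite !inE; apply/idP/idP.
    by case/andP => xF xG; case: (Hx x xG xF) => ->; rewrite eqxx ?orbT.
  by case/orP => /eqP ->; rewrite ?aF ?bF ?aG ?bG.
have := cardsID F G; rewrite E cards2 ab (setIidPr sFG) => cG.
have d := cardSg sFG; rewrite -cG in d.
rewrite dvdn_addr // in d.
have := dvdn_leq (isT : 0 < 2)%N d; rewrite -cG; lia.
Qed.

Lemma gen4 (W : finType) (B : rel W) (H : {group {perm W}}) :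
  R_thick B -> regular_on H -> H <| Defs.Aut B -> (#|W| <= 4)%N.
Proof.
move=> [u [v [uv [Ho Hi]]]] Hr HN.
have tuv : tw B u v by rewrite /tw Ho Hi !eqxx.
case: (leqP #|W| 4) => // W5.
have : ~~ ([set: W] \subset [set u; v]).
  apply/negP => /subset_leq_card; rewrite cardsT cards2; case: (u != v); lia.
case/subsetPn => x0 _; rewrite !inE negb_or => /andP [ux0 vx0].
set t := tperm u v.
have tA : t \in Defs.Aut B by apply: tperm_aut.
have tN : t \in 'N(H) by apply: (subsetP (normal_norm HN)).
have tx0 : t x0 = x0 by rewrite /t tpermD // eq_sym.
have tix0 : t^-1 x0 = x0 by rewrite /t tpermV.
have key : forall h, h \in H -> (h \in 'C_H[t]) = (t (h x0) == h x0).
  move=> h hH; rewrite inE hH /= cent1E.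
  have hJ : h ^ t \in H by rewrite memJ_norm.
  have ev : (h ^ t) x0 = t (h x0) by rewrite conjgE !permM tix0.
  apply/eqP/eqP => [E | E].
    rewrite -ev; congr (fun p : {perm W} => p x0).
    by rewrite conjgE E mulKg.
  have E2 : h ^ t = h by apply: (reg_uniq (x := x0) Hr) => //; rewrite ev E.
  by move: E2; rewrite conjgE => E2; rewrite -{2}E2 mulKVg.
case: (reg_ex x0 u Hr) => a aH au.
case: (reg_ex x0 v Hr) => b bH bv.
suff : (#|H| <= 4)%N by rewrite (reg_card x0 Hr) leqNgt W5.
apply: (@count4 _ H 'C_H[t]%G a b) => //.
- exact: subsetIl.
- by rewrite key // au /t tpermL eq_sym.
- by rewrite key // bv /t tpermR.
- by apply/eqP => ab; move: uv; rewrite -au -bv ab eqxx.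
- move=> h hH; rewrite key // => Hh.
  have : (h x0 == u) || (h x0 == v).
    by apply: contraR Hh; rewrite negb_or => /andP [h1 h2]; rewrite /t tpermD // eq_sym.
  case/orP => /eqP E; [left | right]; apply: (reg_uniq (x := x0) Hr) => //.
    by rewrite E au.
  by rewrite E bv.
Qed.

Lemma iso_thick (V W : finType) (A : rel V) (B : rel W) :
  digraph_iso A B -> R_thick A -> R_thick B.
Proof.
move=> [f [[g fg gf] Hf]] [u [v [uv [Ho Hi]]]].
have tuv : tw A u v by rewrite /tw Ho Hi !eqxx.
exists (f u), (f v); split.
  by apply: contra uv => /eqP /(can_inj fg) ->.
have : tw B (f u) (f v).
  apply/twP => z; rewrite -(gf z) !Hf.
  by move: tuv => /twP H; apply: H.
by case/andP => /eqP -> /eqP ->.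
Qed.

Lemma rmulE (gT : finGroupType) (g x : gT) : rmul_perm g x = x * g.
Proof. by rewrite /rmul_perm permE. Qed.

Lemma Ghat_group (gT : finGroupType) : group_set (Ghat gT).
Proof.
apply/group_setP; split.
  have -> : (1 : {perm gT}) = rmul_perm 1.
    by apply/permP => x; rewrite rmulE perm1 mulg1.
  exact: imset_f.
move=> _ _ /imsetP [g _ ->] /imsetP [h _ ->].
have -> : rmul_perm g * rmul_perm h = rmul_perm (g * h).
  by apply/permP => x; rewrite permM !rmulE mulgA.
exact: imset_f.
Qed.

Lemma Ghat_reg (gT : finGroupType) : regular_on (Ghat gT).
Proof.
move=> x y; apply/eqP/cards1P; exists (rmul_perm (x^-1 * y)).
apply/setP => h; rewrite !inE; apply/andP/eqP => [[/imsetP [g _ ->] /eqP E] | ->].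
  by congr rmul_perm; rewrite -E rmulE mulKg.
by rewrite imset_f // rmulE mulKVg eqxx.
Qed.

Lemma partb (V : finType) (A : rel V) :
  R_thick A -> is_normal_cayley A -> (#|V| <= 4)%N.
Proof.
move=> Ht [gT [S [_ HN Hi]]].
have [f [fb _]] := Hi.
rewrite (bij_eq_card fb).
apply: (@gen4 _ (cayley S) (Group (Ghat_group gT))).
- exact: iso_thick Hi Ht.
- exact: Ghat_reg.
- exact: HN.
Qed.
Lemma twin_ex (V : finType) (A : rel V) :
  vertex_transitive A -> R_thick A -> forall w, exists2 w', w' != w & tw A w w'.
Proof.
move=> Hv [u [v [uv [Ho Hi]]]] w.
have tuv : tw A u v by rewrite /tw Ho Hi !eqxx.
case: (Hv u w) => g gA <-.
exists (g v); first by apply: contra uv => /eqP /perm_inj ->.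
by rewrite tw_aut.
Qed.

Lemma C4E (i j : 'I_4) : C4 i j = (odd i != odd j).
Proof.
by case: i => [[|[|[|[|?]]]] Hi] //; case: j => [[|[|[|[|?]]]] Hj].
Qed.

Lemma partc (V : finType) (A : rel V) :
  loopless A -> vertex_transitive A -> R_thick A -> (#|V| <= 4)%N ->
  has_arc A -> digraph_iso A C4.
Proof.
move=> Hl Hv Ht H4 [x [y Axy]].
have [x' xx' txx'] := twin_ex Hv Ht x.
have [y' yy' tyy'] := twin_ex Hv Ht y.
have ntxy : ~~ tw A x y by apply: contraL Axy => /(tw_noarc Hl).
have ntx'y : ~~ tw A x' y by apply: contra ntxy => /(tw_trans txx').
have ntxy' : ~~ tw A x y' by apply: contra ntxy => H; apply: (tw_trans H (tw_sym tyy')).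
have ntx'y' : ~~ tw A x' y' by apply: contra ntxy' => H; exact: tw_trans txx' H.
have neq : forall a b, ~~ tw A a b -> (a == b) = false.
  by move=> a b; apply: contraNF => /eqP ->; apply: tw_refl.
have e1 := neq _ _ ntxy; have e2 := neq _ _ ntx'y; have e3 := neq _ _ ntxy';
have e4 := neq _ _ ntx'y'.
have e5 : (x' == x) = false by apply/negbTE.
have e6 : (y' == y) = false by apply/negbTE.
have e1' : (y == x) = false by rewrite eq_sym.
have e2' : (y == x') = false by rewrite eq_sym.
have e3' : (y' == x) = false by rewrite eq_sym.
have e4' : (y' == x') = false by rewrite eq_sym.
have e5' : (x == x') = false by rewrite eq_sym.
have e6' : (y == y') = false by rewrite eq_sym.
have cover : forall z, [|| z == x, z == y, z == x' | z == y'].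
  move=> z; apply/negPn/negP => Hz.
  have U : uniq [:: z; x; y; x'; y'].
    rewrite /= !inE; move: Hz; rewrite !negb_or => /and4P [-> -> -> ->].
    by rewrite ?e1 ?e2 ?e3 ?e4 ?e5 ?e6 ?e1' ?e2' ?e3' ?e4' ?e5' ?e6'.
  have := max_card (mem [:: z; x; y; x'; y']).
  rewrite (card_uniqP U) /= => H5; by have := leq_trans H5 H4.
have qy : forall w, ~~ tw A x w -> tw A y w.
  move=> w; case/or4P: (cover w) => /eqP ->; rewrite ?tw_refl ?txx' //.
have Ayx : A y x.
  case: (Hv x y) => g gA gx.
  have Ay : A y (g y) by rewrite -{1}gx (AutP _ _ gA).
  have : tw A x (g y).
    apply: contraT => /qy H; move: ntxy; rewrite -(tw_aut _ _ gA) gx.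
    by rewrite H.
  by move=> H; rewrite (tw_arc (tw_refl A y) H).
have AE : forall u w, A u w = (tw A x u != tw A x w).
  move=> u w.
  case: (boolP (tw A x u)) => pu; case: (boolP (tw A x w)) => pw /=.
  - apply/negbTE/(tw_noarc Hl); exact: tw_trans (tw_sym pu) pw.
  - by rewrite -(tw_arc pu (qy _ pw)).
  - by rewrite -(tw_arc (qy _ pu) pw).
  - apply/negbTE/(tw_noarc Hl); exact: tw_trans (tw_sym (qy _ pu)) (qy _ pw).
pose f v : 'I_4 := if v == x then @Ordinal 4 0 isT else if v == y then @Ordinal 4 1 isT
  else if v == x' then @Ordinal 4 2 isT else @Ordinal 4 3 isT.
pose g (i : 'I_4) := nth x [:: x; y; x'; y'] i.
have fodd : forall v, odd (f v) = ~~ tw A x v.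
  move=> v; case/or4P: (cover v) => /eqP ->; rewrite /f ?eqxx
    ?e1 ?e2 ?e3 ?e4 ?e5 ?e6 ?e1' ?e2' ?e3' ?e4' ?e5' ?e6' /= ?tw_refl ?txx' ?(negbTE ntxy) ?(negbTE ntxy') //.
exists f; split.
  exists g.
    move=> v; case/or4P: (cover v) => /eqP ->; rewrite /f ?eqxx
      ?e1 ?e2 ?e3 ?e4 ?e5 ?e6 ?e1' ?e2' ?e3' ?e4' ?e5' ?e6' //.
  case=> [[|[|[|[|i]]]] Hi] //; apply: val_inj; rewrite /g /f /=
    ?eqxx ?e1 ?e2 ?e3 ?e4 ?e5 ?e6 ?e1' ?e2' ?e3' ?e4' ?e5' ?e6' //.
move=> u w; rewrite C4E !fodd AE.
by case: (tw A x u); case: (tw A x w).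
Qed.
Definition cls (V : finType) (A : rel V) (u : V) : {set V} := [set w | tw A u w].

Lemma cls_eq (V : finType) (A : rel V) u v : tw A u v -> cls A u = cls A v.
Proof.
move=> H; apply/setP => w; rewrite !inE; apply/idP/idP => Hw.
  exact: tw_trans (tw_sym H) Hw.
exact: tw_trans H Hw.
Qed.

Lemma cls_aut (V : finType) (A : rel V) (g : {perm V}) u :
  g \in Defs.Aut A -> cls A (g u) = g @: cls A u.
Proof.
move=> gA; apply/setP => w; rewrite inE -{1}(permKV g w) (tw_aut _ _ gA).
by rewrite -{2}(permKV g w) mem_imset ?inE //; apply: perm_inj.
Qed.

Lemma card_cls (V : finType) (A : rel V) u v :
  vertex_transitive A -> #|cls A u| = #|cls A v|.
Proof.
move=> Hv; case: (Hv u v) => g gA <-.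
by rewrite (cls_aut _ gA) card_imset //; apply: perm_inj.
Qed.

Lemma parta (V : finType) (A : rel V) :
  loopless A -> vertex_transitive A -> R_thick A ->
  exists (S : finType) (sig : rel S) (b : nat),
         (2 <= b)%N /\ digraph_iso A (lexprod sig (emptyK b)).
Proof.
move=> Hl Hv Ht; have [v0 [v1 [v01 [Ho Hi]]]] := Ht.
have t01 : tw A v0 v1 by rewrite /tw Ho Hi !eqxx.
set k := #|cls A v0|.-1.
have c2 : (2 <= #|cls A v0|)%N.
  have : [set v0; v1] \subset cls A v0.
    by apply/subsetP => w; rewrite !inE => /orP [] /eqP ->; rewrite ?tw_refl.
  by move/subset_leq_card; rewrite cards2 v01.
have ck : forall u, #|cls A u| = k.+1.
  by move=> u; rewrite (@card_cls _ _ u v0 Hv) /k; lia.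
have inc : forall u, u \in cls A u by move=> u; rewrite inE tw_refl.
set P := [set cls A v | v in V].
have clsP : forall v, cls A v \in P by move=> v; apply: imset_f.
pose S := {C : {set V} | C \in P}.
pose rep (C : S) := nth v0 (enum (val C)) 0.
have repP : forall v, rep (exist _ (cls A v) (clsP v)) \in cls A v.
  move=> v; rewrite /rep /= -mem_enum mem_nth // -cardE ck.
  done.
exists S, (fun C D => A (rep C) (rep D)), k.+1; split; first by lia.
pose f v : S * 'I_k.+1 := (exist _ (cls A v) (clsP v), inord (index v (enum (cls A v)))).
pose g (p : S * 'I_k.+1) := nth v0 (enum (val p.1)) p.2.
have nthP : forall C : S, forall i : 'I_k.+1, nth v0 (enum (val C)) i \in val C.
  move=> [C CP] i /=; rewrite -mem_enum mem_nth // -cardE.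
  by case/imsetP: CP => w _ ->; rewrite ck.
exists f; split.
  exists g.
    move=> v; rewrite /g /f /= inordK ?nth_index ?mem_enum //.
    by rewrite -(ck v) cardE index_mem mem_enum.
  move=> [[C CP] i]; rewrite /f /g /=.
  have CE : forall z, z \in C -> cls A z = C.
    by case/imsetP: CP => w _ -> z; rewrite inE => H; apply/esym/cls_eq.
  have zC := nthP (exist _ C CP) i; rewrite /= in zC.
  congr (_, _).
    by apply: val_inj; rewrite /= CE.
  apply: val_inj; rewrite /= CE // index_uniq ?enum_uniq ?inordK // -cardE.
  by case/imsetP: CP => w _ ->; rewrite ck.
move=> u w; rewrite /lexprod /emptyK /= andbF orbF.
apply: tw_arc; apply: tw_sym.
  by have := repP u; rewrite inE.
by have := repP w; rewrite inE.
Qed.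

Local Close Scope group_scope.

Theorem lemma5p2 (V : finType) (A : rel V) :
  loopless A -> vertex_transitive A -> R_thick A ->
  [/\ (exists (S : finType) (sig : rel S) (b : nat),
         (2 <= b)%N /\ digraph_iso A (lexprod sig (emptyK b))),
      (is_normal_cayley A -> (#|V| <= 4)%N) &
      (normal_circulant A -> has_arc A -> digraph_iso A C4)].
Proof.
move=> Hl Hv Ht; split.
- exact: parta.
- exact: partb.
- move=> [H [_ _ Hr HN]] Ha.
  apply: partc => //.
  exact: gen4 Ht Hr HN.
Qed.
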